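(* Assume $f$ and all $g_i$ are $C^1$, and the bounded measurable functions $w_i$ on $[t_k,t_{k+1}]$ satisfy \[ \int_{t_k}^{t_{k+1}}\big(v_i(t)-w_i(t)\big)\,dt=0\qquad(i=1,\dots,m). \] Then the local error is $O(h_k^2)$: there is a constant $C$ depending only on the standing bounds ($K,K_i,L,L_i,\Lambda,V_i$) and on bounds for $\sup|w_i|$ such that $\|x(t_{k+1})-y(t_{k+1})\|\le C\,h_k^2$.
   Context: Setting: for $m\ge 1$ consider on $\mathbb{R}^n$ the input-affine system $\dot x(t)=f(x(t))+\sum_{i=1}^m g_i(x(t))v_i(t)$, where $f,g_i:\mathbb{R}^n\to\mathbb{R}^n$ and each $v_i$ is a Lebesgue measurable function with $|v_i(t)|\le V_i$ for some $V_i>0$. Fix a time step $[t_k,t_{k+1}]$ with $h_k=t_{k+1}-t_k>0$ and $t_{k+1/2}=(t_k+t_{k+1})/2$, and let $x$ be a solution on $[t_k,t_{k+1}]$. Given real-valued bounded measurable functions $w_i$ on $[t_k,t_{k+1}]$, let $y$ be the solution of the approximate system $\dot y(t)=f(y(t))+\sum_{i=1}^m g_i(y(t))w_i(t)$ with $y(t_k)=x(t_k)$. Norms: $\|x\|=\max_j|x_j|$ on $\mathbb{R}^n$, the induced matrix norm $\|Q\|=\max_k\sum_i|q_{ki}|$, and the logarithmic norm $\lambda(Q)=\max_k\big(q_{kk}+\sum_{i\neq k}|q_{ki}|\big)$. Standing bounds: there is a convex set $B$ containing $x(t)$ and $y(t)$ for all $t\in[t_k,t_{k+1}]$ on which $\|f\|\le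 K$, $\|g_i\|\le K_i$, $\|Df\|\le L$, $\|Dg_i\|\le L_i$, $\|D^2f\|\le H$, $\|D^2g_i\|\le H_i$ (whenever these derivatives exist; $D$ is the Jacobian, $D^2$ the second derivative) and $\lambda(Df)\le\Lambda$, with $\Lambda\neq 0$. Put $K'=\sum_{i=1}^m V_iK_i$, $L'=\sum_{i=1}^m V_iL_i$, $H'=\sum_{i=1}^m V_iH_i$. *)

(* Defs.v *)
(* classical reals. Vectors in R^n are represented as
   functions nat -> R, of which only the coordinates j < n are relevant. *)
From Stdlib Require Import Reals Lra.
Open Scope R_scope.

Fixpoint rsum (n : nat) (F : nat -> R) : R :=
  match n with O => 0 | S k => rsum k F + F k end.

Fixpoint rmaxn (n : nat) (F : nat -> R) : R :=
  match n with O => 0 | S O => F O | S k => Rmax (rmaxn k F) (F k) end.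

Definition vnorm (n : nat) (x : nat -> R) : R := rmaxn n (fun j => Rabs (x j)).

Definition mnorm (n : nat) (Q : nat -> nat -> R) : R :=
  rmaxn n (fun k => rsum n (fun i => Rabs (Q k i))).

Definition lognorm (n : nat) (Q : nat -> nat -> R) : R :=
  rmaxn n (fun k => Q k k + rsum n (fun i => if Nat.eqb i k then 0 else Rabs (Q k i))).

Definition vsub (x y : nat -> R) : nat -> R := fun j => x j - y j.
Definition vadd (x y : nat -> R) : nat -> R := fun j => x j + y j.
Definition vscal (s : R) (x : nat -> R) : nat -> R := fun j => s * x j.
Definition matvec (n : nat) (Q : nat -> nat -> R) (u : nat -> R) : nat -> R :=
  fun k => rsum n (fun i => Q k i * u i).
Definition msub (P Q : nat -> nat -> R) : nat -> nat -> R := fun k i => P k i - Q k i.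

(* F : R^n -> R^n is C^1 with Jacobian DF (DF x k i = d F_k / d x_i at x):
   Frechet differentiable everywhere with derivative DF, and DF continuous. *)
Definition C1_with (n : nat) (F : (nat -> R) -> (nat -> R))
    (DF : (nat -> R) -> nat -> nat -> R) : Prop :=
  (forall x eps, 0 < eps -> exists delta, 0 < delta /\
     forall y, vnorm n (vsub y x) < delta ->
       vnorm n (vsub (vsub (F y) (F x)) (matvec n (DF x) (vsub y x)))
         <= eps * vnorm n (vsub y x)) /\
  (forall x eps, 0 < eps -> exists delta, 0 < delta /\
     forall y, vnorm n (vsub y x) < delta -> mnorm n (msub (DF y) (DF x)) < eps).

Definition convex (B : (nat -> R) -> Prop) : Prop :=
  forall p q s, B p -> B q -> 0 <= s <= 1 -> B (vadd (vscal s p) (vscal (1 - s) q)).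

Definition outer_le (E : R -> Prop) (r : R) : Prop :=
  forall eps, 0 < eps -> exists a b : nat -> R,
    (forall k, a k <= b k) /\
    (forall t, E t -> exists k, a k < t < b k) /\
    (forall N, rsum N (fun k => b k - a k) <= r + eps).

Definition null_set (E : R -> Prop) : Prop := outer_le E 0.

Definition open_set (O : R -> Prop) : Prop :=
  forall t, O t -> exists d, 0 < d /\ forall s, Rabs (s - t) < d -> O s.

Definition leb_measurable_set (E : R -> Prop) : Prop :=
  forall eps, 0 < eps -> exists O, open_set O /\ (forall t, E t -> O t) /\
    outer_le (fun t => O t /\ ~ E t) eps.

Definition measurable_on (a b : R) (u : R -> R) : Prop :=
  forall c, leb_measurable_set (fun t => a <= t <= b /\ u t < c).

Definition ae_on (a b : R) (P : R -> Prop) : Prop :=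
  exists N, null_set N /\ forall t, a <= t <= b -> ~ N t -> P t.

Definition abs_cont_on (a b : R) (F : R -> R) : Prop :=
  forall eps, 0 < eps -> exists delta, 0 < delta /\
    forall (N : nat) (s e : nat -> R),
      (forall k, (k < N)%nat -> a <= s k /\ s k <= e k /\ e k <= b) ->
      (forall k, (S k < N)%nat -> e k <= s (S k)) ->
      rsum N (fun k => e k - s k) < delta ->
      rsum N (fun k => Rabs (F (e k) - F (s k))) < eps.

(* Lebesgue integral of a bounded measurable u over [a,b] equals I:
   u is a.e. the derivative of an absolutely continuous F with
   F b - F a = I (the fundamental theorem of Lebesgue calculus). *)
Definition leb_integral_is (a b : R) (u : R -> R) (I : R) : Prop :=
  exists F : R -> R, abs_cont_on a b F /\
    ae_on a b (fun t => derivable_pt_lim F t (u t)) /\ F b - F a = I.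

(* z is a (Caratheodory) solution on [a,b] of
   z' = F(z) + sum_{i<m} G_i(z) u_i(t): each coordinate j < n is absolutely
   continuous on [a,b] and the equation holds a.e. on [a,b]. *)
Definition solution_on (n m : nat) (a b : R)
    (F : (nat -> R) -> (nat -> R)) (G : nat -> (nat -> R) -> (nat -> R))
    (u : nat -> R -> R) (z : R -> nat -> R) : Prop :=
  (forall j, (j < n)%nat -> abs_cont_on a b (fun t => z t j)) /\
  ae_on a b (fun t => forall j, (j < n)%nat ->
    derivable_pt_lim (fun s => z s j) t
      (F (z t) j + rsum m (fun i => G i (z t) j * u i t))).

(* Main.v *)
Require Import Defs.
From Stdlib Require Import Reals.
Open Scope R_scope.
From Stdlib Require Import Lra Lia Arith ClassicalEpsilon FunctionalExtensionality.

Lemma rsum_ext n F G : (forall k, (k < n)%nat -> F k = G k) -> rsum n F = rsum n G.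
Proof. induction n; simpl; intros H; [reflexivity|]. rewrite IHn by (intros; apply H; lia). rewrite H by lia. reflexivity. Qed.

Lemma rsum_le n F G : (forall k, (k < n)%nat -> F k <= G k) -> rsum n F <= rsum n G.
Proof. induction n; simpl; intros H; [lra|]. pose proof (IHn (fun k Hk => H k ltac:(lia))). pose proof (H n ltac:(lia)). lra. Qed.

Lemma rsum_plus n F G : rsum n (fun k => F k + G k) = rsum n F + rsum n G.
Proof. induction n; simpl; [lra|]. rewrite IHn. lra. Qed.

Lemma rsum_minus n F G : rsum n (fun k => F k - G k) = rsum n F - rsum n G.
Proof. induction n; simpl; [lra|]. rewrite IHn. lra. Qed.

Lemma rsum_scal n c F : rsum n (fun k => c * F k) = c * rsum n F.
Proof. induction n; simpl; [lra|]. rewrite IHn. lra. Qed.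

Lemma rsum_abs n F : Rabs (rsum n F) <= rsum n (fun k => Rabs (F k)).
Proof. induction n; simpl. rewrite Rabs_R0; lra.
  eapply Rle_trans; [apply Rabs_triang|]. lra. Qed.

Lemma rsum_nonneg n F : (forall k, (k < n)%nat -> 0 <= F k) -> 0 <= rsum n F.
Proof. intros H. apply Rle_trans with (rsum n (fun _ => 0)).
  clear. induction n; simpl; lra. apply rsum_le; auto. Qed.

Lemma rsum_tele p (u : nat -> R) : rsum p (fun i => u (S i) - u i) = u p - u O.
Proof. induction p; simpl; [lra|]. rewrite IHp. lra. Qed.

Lemma rmaxn_ge n F k : (k < n)%nat -> F k <= rmaxn n F.
Proof. induction n; intros Hk; [lia|].
  destruct n. replace k with O by lia. simpl. lra.
  change (rmaxn (S (S n)) F) with (Rmax (rmaxn (S n) F) (F (S n))).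
  destruct (Nat.eq_dec k (S n)). subst. apply Rmax_r.
  eapply Rle_trans; [apply IHn; lia| apply Rmax_l]. Qed.

Lemma rmaxn_le n F M : 0 <= M -> (forall k, (k < n)%nat -> F k <= M) -> rmaxn n F <= M.
Proof. intros H0. induction n; intros H; [simpl; lra|].
  destruct n. simpl. apply H; lia.
  change (rmaxn (S (S n)) F) with (Rmax (rmaxn (S n) F) (F (S n))).
  apply Rmax_lub. apply IHn; intros; apply H; lia. apply H; lia. Qed.

Lemma rmaxn_nonneg n F : (forall k, 0 <= F k) -> 0 <= rmaxn n F.
Proof. intros H. destruct n. simpl; lra. eapply Rle_trans; [apply (H O)|]. apply rmaxn_ge; lia. Qed.

Lemma vnorm_nonneg n x : 0 <= vnorm n x.
Proof. apply rmaxn_nonneg. intros; apply Rabs_pos. Qed.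

Lemma vnorm_coord n x j : (j < n)%nat -> Rabs (x j) <= vnorm n x.
Proof. intros; unfold vnorm; apply (rmaxn_ge n (fun j => Rabs (x j))); auto. Qed.

Lemma vnorm_le n x M : 0 <= M -> (forall j, (j < n)%nat -> Rabs (x j) <= M) -> vnorm n x <= M.
Proof. intros; unfold vnorm; apply rmaxn_le; auto. Qed.

Lemma mnorm_nonneg n Q : 0 <= mnorm n Q.
Proof. apply rmaxn_nonneg. intros; apply rsum_nonneg; intros; apply Rabs_pos. Qed.

Lemma matvec_bound n Q u k : (k < n)%nat -> Rabs (matvec n Q u k) <= mnorm n Q * vnorm n u.
Proof. intros Hk. unfold matvec. eapply Rle_trans; [apply rsum_abs|].
  apply Rle_trans with (rsum n (fun i => Rabs (Q k i)) * vnorm n u).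
  rewrite Rmult_comm, <- rsum_scal. apply rsum_le. intros i Hi. rewrite Rabs_mult.
  rewrite Rmult_comm. apply Rmult_le_compat_r. apply Rabs_pos. apply vnorm_coord; auto.
  apply Rmult_le_compat_r. apply vnorm_nonneg.
  unfold mnorm. apply (rmaxn_ge n (fun k => rsum n (fun i => Rabs (Q k i)))); auto. Qed.

Lemma rsum_zero n F : (forall k, (k < n)%nat -> F k = 0) -> rsum n F = 0.
Proof. induction n; simpl; intros H; [reflexivity|]. rewrite IHn by (intros; apply H; lia). rewrite H by lia. ring. Qed.


Definition rind (P : Prop) : R := if excluded_middle_informative P then 1 else 0.

Lemma sorted_sum (x : nat -> R) p al be :
  (forall i, (i < p)%nat -> x i <= x (S i)) ->
  rsum p (fun i => rind (al <= x i /\ x (S i) <= be) * (x (S i) - x i))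
    <= Rmax 0 (Rmin (x p) be - al).
Proof.
  induction p; intros Hs; simpl. unfold Rmax; destruct (Rle_dec 0 _); lra.
  pose proof (IHp (fun i Hi => Hs i ltac:(lia))) as IH. pose proof (Hs p ltac:(lia)) as Hp.
  unfold rind at 2. destruct (excluded_middle_informative _) as [[H1 H2]|Hn].
  - assert (Rmax 0 (Rmin (x p) be - al) = x p - al).
    { unfold Rmin; destruct (Rle_dec (x p) be); try lra. unfold Rmax; destruct (Rle_dec 0 _); lra. }
    assert (Rmax 0 (Rmin (x (S p)) be - al) = x (S p) - al).
    { unfold Rmin; destruct (Rle_dec (x (S p)) be); try lra. unfold Rmax; destruct (Rle_dec 0 _); lra. }
    lra.
  - assert (Rmax 0 (Rmin (x p) be - al) <= Rmax 0 (Rmin (x (S p)) be - al)).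
    { apply Rle_max_compat_l. unfold Rmin; destruct (Rle_dec (x p) be); destruct (Rle_dec (x (S p)) be); lra. }
    lra.
Qed.

Lemma rind_le01 P : 0 <= rind P <= 1.
Proof. unfold rind; destruct (excluded_middle_informative P); lra. Qed.

Lemma cover_sum (x : nat -> R) p (aa bb : nat -> R) M : forall (P : nat -> Prop),
  (forall i, (i < p)%nat -> x i <= x (S i)) -> (forall k, aa k <= bb k) ->
  (forall i, (i < p)%nat -> P i -> exists k, (k < M)%nat /\ aa k <= x i /\ x (S i) <= bb k) ->
  rsum p (fun i => rind (P i) * (x (S i) - x i)) <= rsum M (fun k => bb k - aa k).
Proof.
  induction M; intros P Hs Hab HP.
  - simpl. apply Rle_trans with (rsum p (fun _ => 0)).
    apply rsum_le. intros i Hi. unfold rind; destruct (excluded_middle_informative (P i)).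
    destruct (HP i Hi p0) as [k [Hk _]]; lia. lra.
    clear. induction p; simpl; lra.
  - simpl.
    set (P' := fun i => P i /\ exists k, (k < M)%nat /\ aa k <= x i /\ x (S i) <= bb k).
    apply Rle_trans with (rsum p (fun i => rind (P' i) * (x (S i) - x i)
        + rind (aa M <= x i /\ x (S i) <= bb M) * (x (S i) - x i))).
    + apply rsum_le. intros i Hi. pose proof (Hs i Hi). unfold rind.
      destruct (excluded_middle_informative (P i)) as [Hpi|Hpi];
      destruct (excluded_middle_informative (P' i)) as [Hp'|Hp'];
      destruct (excluded_middle_informative (aa M <= x i /\ x (S i) <= bb M)) as [Hm|Hm]; try lra.
      all: try (exfalso; apply Hpi; destruct Hp'; auto; fail).
      all: exfalso; destruct (HP i Hi Hpi) as [k [Hk Hc]];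
      destruct (Nat.eq_dec k M); [subst; auto| apply Hp'; split; auto; exists k; split; auto; lia].
    + rewrite rsum_plus. apply Rplus_le_compat.
      apply IHM; auto. intros i Hi [_ H]; auto.
      eapply Rle_trans; [apply sorted_sum; auto|].
      specialize (Hab M). unfold Rmax; destruct (Rle_dec 0 _); unfold Rmin in *; destruct (Rle_dec (x p) (bb M)); lra.
Qed.

Lemma eps_lemma X Y Z : (forall e, 0 < e -> e <= 1 -> X <= Y + e * Z) -> X <= Y.
Proof.
  intros H. destruct (Rle_dec X Y); auto. exfalso.
  set (e := Rmin 1 ((X - Y) / (2 * (Rabs Z + 1)))).
  assert (HA: 0 < Rabs Z + 1) by (pose proof (Rabs_pos Z); lra).
  assert (He: 0 < e). { unfold e. apply Rmin_glb_lt. lra. apply Rdiv_lt_0_compat; lra. }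
  assert (He1: e <= 1) by apply Rmin_l.
  assert (He2: e <= (X - Y) / (2 * (Rabs Z + 1))) by apply Rmin_r.
  specialize (H e He He1).
  assert (e * Z <= e * Rabs Z) by (apply Rmult_le_compat_l; [lra| apply Rle_abs]).
  assert (e * (Rabs Z + 1) <= (X - Y) / 2).
  { apply Rmult_le_compat_r with (r := Rabs Z + 1) in He2; [|lra].
    replace ((X - Y) / (2 * (Rabs Z + 1)) * (Rabs Z + 1)) with ((X-Y)/2) in He2 by (field; lra). lra. }
  nra.
Qed.

Definition fine (dl : R -> R) (a s : R) (p : nat) (x tg : nat -> R) : Prop :=
  x O = a /\ x p = s /\ forall i, (i < p)%nat -> x i <= tg i <= x (S i) /\ x (S i) - x i < dl (tg i).

Lemma cousin dl a b : a <= b -> (forall t, a <= t <= b -> 0 < dl t) ->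
  exists p x tg, fine dl a b p x tg.
Proof.
  intros Hab Hpos.
  set (E := fun s => a <= s <= b /\ exists p x tg, fine dl a s p x tg).
  assert (HEa : E a). { split; [lra|]. exists O, (fun _ => a), (fun _ => a). split; auto. split; auto. intros; lia. }
  destruct (completeness E) as [c [Hub Hlub]].
  { exists b. intros s [Hs _]; lra. } { exists a; auto. }
  assert (Hac : a <= c) by (apply Hub; auto).
  assert (Hcb : c <= b) by (apply Hlub; intros s [Hs _]; lra).
  set (dc := dl c). assert (Hdc : 0 < dc) by (apply Hpos; lra).
  assert (Hex : exists s, E s /\ c - dc / 2 < s).
  { apply Classical_Prop.NNPP; intro Hn. assert (c <= c - dc/2); [|lra].
    apply Hlub. intros s Hs. destruct (Rle_dec s (c - dc/2)); auto. exfalso; apply Hn; exists s; split; auto; lra. }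
  destruct Hex as [s [[Hs [p [x [tg [Hx0 [Hxp Hf]]]]]] Hsc]].
  assert (Hsc' : s <= c) by (apply Hub; split; auto; exists p, x, tg; split; auto).
  set (c' := Rmin b (c + dc / 4)).
  assert (Hc'1 : c' <= b) by apply Rmin_l. assert (Hc'2 : c' <= c + dc/4) by apply Rmin_r.
  assert (Hc'3 : c <= c') by (unfold c'; apply Rmin_glb; lra).
  set (x' := fun i => if Nat.leb i p then x i else c').
  set (tg' := fun i => if Nat.ltb i p then tg i else c).
  assert (HE' : fine dl a c' (S p) x' tg').
  { unfold fine, x', tg'. split. simpl. auto. split.
    assert (Nat.leb (S p) p = false) by (apply Nat.leb_gt; lia). rewrite H; auto.
    intros i Hi. destruct (Nat.ltb i p) eqn:E1.
    - apply Nat.ltb_lt in E1. assert (Nat.leb i p = true) by (apply Nat.leb_le; lia).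
      assert (Nat.leb (S i) p = true) by (apply Nat.leb_le; lia). rewrite H, H0. apply Hf; auto.
    - apply Nat.ltb_ge in E1. assert (i = p) by lia. subst i.
      assert (Nat.leb p p = true) by (apply Nat.leb_le; lia).
      assert (Nat.leb (S p) p = false) by (apply Nat.leb_gt; lia). rewrite H, H0, Hxp. fold dc. lra. }
  assert (Hc'c : c' <= c). { apply Hub. split. lra. exists (S p), x', tg'; auto. }
  assert (Hbc : b <= c). { unfold c' in *. unfold Rmin in Hc'c. destruct (Rle_dec b (c + dc/4)); lra. }
  assert (c' = b) by lra. rewrite H in HE'. eauto.
Qed.

Lemma fine_bounds dl a b p x tg : fine dl a b p x tg -> forall i, (i <= p)%nat -> a <= x i <= b.
Proof.
  intros [H0 [Hp Hf]].
  assert (Hl : forall i, (i <= p)%nat -> x O <= x i).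
  { induction i; intros Hi. lra. pose proof (Hf i ltac:(lia)). pose proof (IHi ltac:(lia)). lra. }
  assert (Hr : forall d i, (i + d = p)%nat -> x i <= x p).
  { induction d; intros i Hi. replace i with p by lia; lra.
    pose proof (Hf i ltac:(lia)). pose proof (IHd (S i) ltac:(lia)). lra. }
  intros i Hi. split. rewrite <- H0; auto. rewrite <- Hp. apply (Hr (p - i)%nat); lia.
Qed.

Lemma deriv_local f t d : derivable_pt_lim f t d -> forall e, 0 < e ->
  exists dl, 0 < dl /\ forall s, Rabs (s - t) < dl -> Rabs (f s - f t - d * (s - t)) <= e * Rabs (s - t).
Proof.
  intros Hd e He. destruct (Hd e He) as [dl Hdl]. exists dl. split. apply cond_pos.
  intros s Hs. destruct (Req_dec s t). subst. replace (f t - f t - d * (t - t)) with 0 by ring.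
  rewrite Rminus_diag, Rabs_R0. lra.
  assert (Hh : s - t <> 0) by lra. specialize (Hdl (s - t) Hh Hs). replace (t + (s - t)) with s in Hdl by ring.
  replace (f s - f t - d * (s - t)) with ((s - t) * ((f s - f t) / (s - t) - d)) by (field; auto).
  rewrite Rabs_mult. rewrite Rmult_comm. apply Rmult_le_compat_r. apply Rabs_pos. lra.
Qed.

Lemma finite_choice_bound p (Pr : nat -> nat -> Prop) :
  (forall i, (i < p)%nat -> exists k, Pr i k) -> exists M, forall i, (i < p)%nat -> exists k, (k < M)%nat /\ Pr i k.
Proof.
  induction p; intros H. exists O; intros; lia.
  destruct IHp as [M HM]. intros; apply H; lia. destruct (H p ltac:(lia)) as [k Hk].
  exists (S (Nat.max M k)). intros i Hi. destruct (Nat.eq_dec i p). subst. exists k; split; auto; lia.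
  destruct (HM i ltac:(lia)) as [k' [Hk' Hp']]. exists k'; split; auto; lia.
Qed.


Lemma lemA a b (phi : R -> R) G : a <= b -> abs_cont_on a b phi ->
  (exists N, null_set N /\ forall t, a <= t <= b -> ~ N t ->
     exists d, derivable_pt_lim phi t d /\ d <= G) ->
  phi b - phi a <= G * (b - a).
Proof.
  intros Hab Hac [N [HN Hd]].
  apply (eps_lemma _ _ (b - a + 2 + Rabs G)). intros e He He1.
  destruct (Hac e He) as [d1 [Hd1 Hac1]].
  set (eta := Rmin d1 e / 2).
  assert (Heta : 0 < eta) by (unfold eta; pose proof (Rmin_glb_lt d1 e 0 Hd1 He); lra).
  assert (Heta1 : eta < d1) by (unfold eta; pose proof (Rmin_l d1 e); lra).
  assert (Heta2 : eta <= e / 2) by (unfold eta; pose proof (Rmin_r d1 e); lra).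
  destruct (HN eta Heta) as [aa [bb [Hab' [Hcov Hsum]]]].
  set (good := fun t dl => forall s, Rabs (s - t) < dl ->
      (t <= s -> phi s - phi t <= (G + e) * (s - t)) /\ (s <= t -> phi t - phi s <= (G + e) * (t - s))).
  set (Q := fun t dl => 0 < dl /\ (good t dl \/ exists k, aa k <= t - dl /\ t + dl <= bb k)).
  assert (Hex : forall t, exists dl, a <= t <= b -> Q t dl).
  { intros t. destruct (Rle_dec a t) as [Ht1|Ht1]; [destruct (Rle_dec t b) as [Ht2|Ht2]|];
      try (exists 1; intros; lra).
    destruct (Classical_Prop.classic (N t)) as [HNt|HNt].
    - destruct (Hcov t HNt) as [k Hk]. exists (Rmin (t - aa k) (bb k - t)). intros _.
      split. apply Rmin_glb_lt; lra. right. exists k.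
      pose proof (Rmin_l (t - aa k) (bb k - t)). pose proof (Rmin_r (t - aa k) (bb k - t)). lra.
    - destruct (Hd t (conj Ht1 Ht2) HNt) as [dd [Hder HdG]].
      destruct (deriv_local _ _ _ Hder e He) as [dl [Hdl Hloc]]. exists dl. intros _. split; auto. left.
      intros s Hs. specialize (Hloc s Hs). split; intros Hst.
      + rewrite (Rabs_right (s - t)) in Hloc by lra.
        pose proof (Rle_abs (phi s - phi t - dd * (s - t))).
        assert (dd * (s - t) <= G * (s - t)) by (apply Rmult_le_compat_r; lra). lra.
      + rewrite (Rabs_left1 (s - t)) in Hloc by lra.
        pose proof (Rle_abs (-(phi s - phi t - dd * (s - t)))). rewrite Rabs_Ropp in H.
        assert (dd * (t - s) <= G * (t - s)) by (apply Rmult_le_compat_r; lra). lra. }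
  set (dlf := fun t => proj1_sig (constructive_indefinite_description _ (Hex t))).
  assert (HQ : forall t, a <= t <= b -> Q t (dlf t)).
  { intros t Ht. unfold dlf. destruct (constructive_indefinite_description _ (Hex t)); simpl; auto. }
  destruct (cousin dlf a b Hab) as [p [x [tg Hfine]]]. { intros t Ht. apply (HQ t Ht). }
  pose proof (fine_bounds _ _ _ _ _ _ Hfine) as Hxb.
  destruct Hfine as [Hx0 [Hxp Hf]].
  set (P := fun i => ~ good (tg i) (dlf (tg i))).
  set (term := fun i => phi (x (S i)) - phi (x i)).
  set (len := fun i => x (S i) - x i).
  assert (Htg : forall i, (i < p)%nat -> a <= tg i <= b).
  { intros i Hi. pose proof (Hxb i ltac:(lia)). pose proof (Hxb (S i) ltac:(lia)). pose proof (Hf i Hi). lra. }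
  assert (Hpt : forall i, (i < p)%nat -> term i <= (G + e) * len i + rind (P i) * (Rabs (term i) + Rabs (G + e) * len i)).
  { intros i Hi. pose proof (Hf i Hi) as [[H1 H2] H3]. unfold rind, P, term, len.
    destruct (excluded_middle_informative _) as [Hb|Hg].
    - pose proof (Rle_abs (phi (x (S i)) - phi (x i))).
      pose proof (Rle_abs (-(G+e))). rewrite Rabs_Ropp in H0.
      assert (0 <= x (S i) - x i) by lra. nra.
    - apply Classical_Prop.NNPP in Hg.
      destruct (Hg (x (S i))) as [Ha _]. rewrite Rabs_right by lra. lra.
      destruct (Hg (x i)) as [_ Hb]. rewrite Rabs_left1 by lra. lra.
      specialize (Ha H2). specialize (Hb H1). nra. }
  assert (Htot : phi b - phi a = rsum p term) by (unfold term; rewrite (rsum_tele p (fun j => phi (x j))); rewrite Hxp, Hx0; auto).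
  assert (Hlen : rsum p len = b - a) by (unfold len; rewrite (rsum_tele p x); rewrite Hxp, Hx0; auto).
  assert (Hbad : forall i, (i < p)%nat -> P i -> exists k, aa k <= x i /\ x (S i) <= bb k).
  { intros i Hi HPi. destruct (HQ (tg i) (Htg i Hi)) as [_ [Hg|[k Hk]]]. contradiction.
    exists k. pose proof (Hf i Hi). lra. }
  assert (Hbad2 : exists M, forall i, (i < p)%nat -> P i -> exists k, (k < M)%nat /\ aa k <= x i /\ x (S i) <= bb k).
  { destruct (finite_choice_bound p (fun i k => P i -> aa k <= x i /\ x (S i) <= bb k)) as [M HM].
    intros i Hi. destruct (Classical_Prop.classic (P i)) as [HPi|HPi].
    destruct (Hbad i Hi HPi) as [k Hk]; exists k; auto. exists O; intros; contradiction.
    exists M. intros i Hi HPi. destruct (HM i Hi) as [k [Hk Hk']]. exists k; auto. }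
  destruct Hbad2 as [M HM].
  assert (Hsorted : forall i, (i < p)%nat -> x i <= x (S i)) by (intros i Hi; pose proof (Hf i Hi); lra).
  assert (HL : rsum p (fun i => rind (P i) * len i) <= eta).
  { eapply Rle_trans. apply (cover_sum x p aa bb M P Hsorted Hab' HM). specialize (Hsum M). lra. }
  assert (HT : rsum p (fun i => rind (P i) * Rabs (term i)) < e).
  { set (ee := fun i => if excluded_middle_informative (P i) then x (S i) else x i).
    assert (E1 : rsum p (fun k => ee k - x k) = rsum p (fun i => rind (P i) * len i)).
    { apply rsum_ext. intros k Hk. unfold ee, rind, len. destruct (excluded_middle_informative (P k)); lra. }
    assert (E2 : rsum p (fun k => Rabs (phi (ee k) - phi (x k))) = rsum p (fun i => rind (P i) * Rabs (term i))).
    { apply rsum_ext. intros k Hk. unfold ee, rind, term. destruct (excluded_middle_informative (P k)). lra.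
      rewrite Rminus_diag, Rabs_R0. lra. }
    rewrite <- E2. apply Hac1.
    - intros k Hk. pose proof (Hxb k ltac:(lia)). pose proof (Hxb (S k) ltac:(lia)). pose proof (Hsorted k Hk).
      unfold ee. destruct (excluded_middle_informative (P k)); lra.
    - intros k Hk. unfold ee. pose proof (Hsorted k ltac:(lia)). destruct (excluded_middle_informative (P k)); lra.
    - rewrite E1. lra. }
  assert (Hsum2 : rsum p term <= (G + e) * rsum p len + rsum p (fun i => rind (P i) * Rabs (term i))
      + Rabs (G + e) * rsum p (fun i => rind (P i) * len i)).
  { rewrite <- !rsum_scal, <- !rsum_plus. apply rsum_le. intros i Hi. specialize (Hpt i Hi). lra. }
  rewrite Htot. rewrite Hlen in Hsum2.
  assert (Rabs (G + e) <= Rabs G + 1) by (eapply Rle_trans; [apply Rabs_triang|]; rewrite (Rabs_right e); lra).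
  assert (0 <= rsum p (fun i => rind (P i) * len i)).
  { apply rsum_nonneg. intros i Hi. pose proof (rind_le01 (P i)). pose proof (Hsorted i Hi). unfold len. nra. }
  assert (Rabs (G + e) * rsum p (fun i => rind (P i) * len i) <= (Rabs G + 1) * (e / 2)).
  { apply Rmult_le_compat; auto. apply Rabs_pos. lra. }
  pose proof (Rabs_pos G). nra.
Qed.


Lemma dpl_ext f g t d : (forall s, f s = g s) -> derivable_pt_lim f t d -> derivable_pt_lim g t d.
Proof. intros H. replace g with f; auto. apply functional_extensionality; auto. Qed.

Lemma ac_restrict a b a' b' f : abs_cont_on a b f -> a <= a' -> b' <= b -> abs_cont_on a' b' f.
Proof.
  intros H Ha Hb e He. destruct (H e He) as [d [Hd Hf]]. exists d; split; auto.
  intros N s ee H1 H2 H3. apply Hf; auto. intros k Hk. specialize (H1 k Hk). lra.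
Qed.

Lemma ac_ext a b f g : (forall s, f s = g s) -> abs_cont_on a b f -> abs_cont_on a b g.
Proof. intros H. replace g with f; auto. apply functional_extensionality; auto. Qed.

Lemma ac_const a b c : abs_cont_on a b (fun _ => c).
Proof. intros e He. exists 1; split; [lra|]. intros N s ee _ _ _.
  apply Rle_lt_trans with (rsum N (fun _ => 0)). apply rsum_le. intros. rewrite Rminus_diag, Rabs_R0; lra.
  clear -He. induction N; simpl; lra. Qed.

Lemma ac_plus a b f g : abs_cont_on a b f -> abs_cont_on a b g -> abs_cont_on a b (fun s => f s + g s).
Proof.
  intros Hf Hg e He. destruct (Hf (e/2)) as [d1 [Hd1 H1]]; [lra|]. destruct (Hg (e/2)) as [d2 [Hd2 H2]]; [lra|].
  exists (Rmin d1 d2). split. apply Rmin_glb_lt; auto.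
  intros N s ee A B C. pose proof (Rmin_l d1 d2). pose proof (Rmin_r d1 d2).
  specialize (H1 N s ee A B ltac:(lra)). specialize (H2 N s ee A B ltac:(lra)).
  eapply Rle_lt_trans. apply (rsum_le N _ (fun k => Rabs (f (ee k) - f (s k)) + Rabs (g (ee k) - g (s k)))).
  intros k Hk. replace (f (ee k) + g (ee k) - (f (s k) + g (s k))) with ((f (ee k) - f (s k)) + (g (ee k) - g (s k))) by ring.
  apply Rabs_triang. rewrite rsum_plus. lra.
Qed.

Lemma ac_scal a b c f : abs_cont_on a b f -> abs_cont_on a b (fun s => c * f s).
Proof.
  intros Hf e He. assert (Hc : 0 < Rabs c + 1) by (pose proof (Rabs_pos c); lra).
  destruct (Hf (e / (Rabs c + 1))) as [d [Hd H1]]. apply Rdiv_lt_0_compat; lra.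
  exists d; split; auto. intros N s ee A B C. specialize (H1 N s ee A B C).
  replace (rsum N (fun k => Rabs (c * f (ee k) - c * f (s k)))) with (Rabs c * rsum N (fun k => Rabs (f (ee k) - f (s k)))).
  2:{ rewrite <- rsum_scal. apply rsum_ext. intros. rewrite <- Rabs_mult. f_equal. ring. }
  assert (0 <= rsum N (fun k => Rabs (f (ee k) - f (s k)))) by (apply rsum_nonneg; intros; apply Rabs_pos).
  apply Rmult_lt_compat_l with (r := Rabs c + 1) in H1; [|lra].
  replace ((Rabs c + 1) * (e / (Rabs c + 1))) with e in H1 by (field; lra). nra.
Qed.

Lemma ac_minus a b f g : abs_cont_on a b f -> abs_cont_on a b g -> abs_cont_on a b (fun s => f s - g s).
Proof. intros Hf Hg. apply ac_ext with (fun s => f s + (-1) * g s). intros; ring.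
  apply ac_plus; auto. apply ac_scal; auto. Qed.

Lemma ac_rsum a b m (F : nat -> R -> R) : (forall i, (i < m)%nat -> abs_cont_on a b (F i)) ->
  abs_cont_on a b (fun s => rsum m (fun i => F i s)).
Proof. induction m; intros H; simpl. apply ac_const. apply ac_plus. apply IHm; intros; apply H; lia. apply H; lia. Qed.

Lemma dpl_rsum m (F : nat -> R -> R) (D : nat -> R) t : (forall i, (i < m)%nat -> derivable_pt_lim (F i) t (D i)) ->
  derivable_pt_lim (fun s => rsum m (fun i => F i s)) t (rsum m D).
Proof. induction m; intros H; simpl.
  apply dpl_ext with (fct_cte 0). intros; reflexivity. apply derivable_pt_lim_const.
  apply dpl_ext with ((fun s => rsum m (fun i => F i s)) + F m)%F. intros; reflexivity.
  apply derivable_pt_lim_plus. apply IHm; intros; apply H; lia. apply H; lia. Qed.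

Lemma rsum_S n F : rsum (S n) F = rsum n F + F n.
Proof. reflexivity. Qed.

Definition il (f g : nat -> R) (k : nat) : R := if Nat.even k then f (Nat.div2 k) else g (Nat.div2 k).

Lemma il_sum N f g : rsum (2 * N) (il f g) = rsum N f + rsum N g.
Proof. induction N. simpl; lra.
  replace (2 * S N)%nat with (S (S (2 * N))) by lia. rewrite !rsum_S, IHN. simpl (rsum (S N) _).
  unfold il. rewrite Nat.even_even, Nat.div2_double.
  replace (Nat.even (S (2 * N))) with false. rewrite Nat.div2_succ_double. lra.
  replace (S (2*N)) with (2 * N + 1)%nat by lia. rewrite Nat.even_odd; auto. Qed.

Lemma rsum_mono_n N N' F : (N <= N')%nat -> (forall k, 0 <= F k) -> rsum N F <= rsum N' F.
Proof. intros H HF. induction H. lra. simpl. specialize (HF m). lra. Qed.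

Lemma null_union A B : null_set A -> null_set B -> null_set (fun t => A t \/ B t).
Proof.
  intros HA HB e He. destruct (HA (e/2)) as [a1 [b1 [H1 [C1 S1]]]]; [lra|].
  destruct (HB (e/2)) as [a2 [b2 [H2 [C2 S2]]]]; [lra|].
  exists (il a1 a2), (il b1 b2). split; [|split].
  - intros k. unfold il. destruct (Nat.even k); auto.
  - intros t [Ht|Ht].
    + destruct (C1 t Ht) as [k Hk]. exists (2 * k)%nat. unfold il. rewrite Nat.even_even, Nat.div2_double; auto.
    + destruct (C2 t Ht) as [k Hk]. exists (2 * k + 1)%nat. unfold il. rewrite Nat.even_odd.
      replace (2 * k + 1)%nat with (S (2 * k)) by lia. rewrite Nat.div2_succ_double; auto.
  - intros N. eapply Rle_trans. apply (rsum_mono_n N (2 * N)). lia.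
    intros k. unfold il. destruct (Nat.even k). specialize (H1 (Nat.div2 k)); lra. specialize (H2 (Nat.div2 k)); lra.
    replace (rsum (2 * N) (fun k => il b1 b2 k - il a1 a2 k)) with (rsum (2 * N) (il (fun k => b1 k - a1 k) (fun k => b2 k - a2 k))).
    rewrite il_sum. specialize (S1 N). specialize (S2 N). lra.
    apply rsum_ext. intros k _. unfold il. destruct (Nat.even k); auto.
Qed.

Lemma null_empty : null_set (fun _ => False).
Proof. intros e He. exists (fun _ => 0), (fun _ => 0). split; [intros; lra|]. split. intros t [].
  intros N. apply Rle_trans with 0. apply Rle_trans with (rsum N (fun _ => 0)). apply rsum_le; intros; lra.
  clear; induction N; simpl; lra. lra. Qed.

Lemma ae_and a b P Q : ae_on a b P -> ae_on a b Q -> ae_on a b (fun t => P t /\ Q t).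
Proof. intros [N1 [H1 K1]] [N2 [H2 K2]]. exists (fun t => N1 t \/ N2 t). split. apply null_union; auto.
  intros t Ht Hn. split. apply K1; tauto. apply K2; tauto. Qed.

Lemma ae_forall a b m (P : nat -> R -> Prop) : (forall i, (i < m)%nat -> ae_on a b (P i)) ->
  ae_on a b (fun t => forall i, (i < m)%nat -> P i t).
Proof. induction m; intros H. exists (fun _ => False). split. apply null_empty. intros; lia.
  destruct (ae_and a b (fun t => forall i, (i < m)%nat -> P i t) (P m)) as [N [HN K]].
  apply IHm; intros; apply H; lia. apply H; lia.
  exists N. split; auto. intros t Ht Hn i Hi. destruct (K t Ht Hn) as [K1 K2].
  destruct (Nat.eq_dec i m). subst; auto. apply K1; lia. Qed.

Lemma ae_mono a b (P Q : R -> Prop) : ae_on a b P -> (forall t, a <= t <= b -> P t -> Q t) -> ae_on a b Q.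
Proof. intros [N [HN K]] H. exists N; split; auto. Qed.

Lemma lemA_abs a b phi G : a <= b -> abs_cont_on a b phi ->
  ae_on a b (fun t => exists d, derivable_pt_lim phi t d /\ Rabs d <= G) ->
  Rabs (phi b - phi a) <= G * (b - a).
Proof.
  intros Hab Hac [N [HN Hd]]. apply Rabs_le. split.
  - assert (- phi b - - phi a <= G * (b - a)); [|lra].
    apply (lemA a b (fun s => - phi s) G); auto. apply ac_ext with (fun s => (-1) * phi s). intros; ring. apply ac_scal; auto.
    exists N; split; auto. intros t Ht HNt. destruct (Hd t Ht HNt) as [d [H1 H2]]. exists (-d). split.
    apply dpl_ext with (- phi)%F. intros; reflexivity. apply derivable_pt_lim_opp; auto.
    pose proof (Rle_abs (-d)). rewrite Rabs_Ropp in H. lra.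
  - apply lemA; auto. exists N; split; auto. intros t Ht HNt. destruct (Hd t Ht HNt) as [d [H1 H2]]. exists d. split; auto.
    pose proof (Rle_abs d). lra.
Qed.


Lemma vnorm_scal n c u : vnorm n (vscal c u) = Rabs c * vnorm n u.
Proof. unfold vnorm, vscal. induction n. simpl. ring.
  destruct n. simpl. apply Rabs_mult.
  change (rmaxn (S (S n)) (fun j => Rabs (c * u j))) with (Rmax (rmaxn (S n) (fun j => Rabs (c * u j))) (Rabs (c * u (S n)))).
  change (rmaxn (S (S n)) (fun j => Rabs (u j))) with (Rmax (rmaxn (S n) (fun j => Rabs (u j))) (Rabs (u (S n)))).
  rewrite IHn, Rabs_mult. rewrite RmaxRmult; auto. apply Rabs_pos. Qed.

Lemma mvt_vec n F DF B Lb : C1_with n F DF -> convex B -> (forall p, B p -> mnorm n (DF p) <= Lb) ->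
  forall p q, B p -> B q -> forall j, (j < n)%nat -> Rabs (F p j - F q j) <= Lb * vnorm n (vsub p q).
Proof.
  intros [HF _] Hcv HL p q Hp Hq j Hj.
  set (u := vsub p q). set (r := fun s => vadd (vscal s p) (vscal (1 - s) q)).
  set (phi := fun s => F (r s) j). set (D := fun s => matvec n (DF (r s)) u j).
  assert (Hc : 0 < vnorm n u + 1) by (pose proof (vnorm_nonneg n u); lra).
  assert (Hder : forall s, derivable_pt_lim phi s (D s)).
  { intros s e He. destruct (HF (r s) (e / (vnorm n u + 1))) as [dl [Hdl Hfr]]. apply Rdiv_lt_0_compat; lra.
    assert (Hpos : 0 < dl / (vnorm n u + 1)) by (apply Rdiv_lt_0_compat; lra).
    exists (mkposreal _ Hpos). simpl. intros h Hh0 Hh.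
    assert (Hrv : vsub (r (s + h)) (r s) = vscal h u).
    { apply functional_extensionality. intros k. unfold vsub, r, vadd, vscal, u, vsub. ring. }
    assert (Hn : vnorm n (vsub (r (s + h)) (r s)) < dl).
    { rewrite Hrv, vnorm_scal. apply Rmult_lt_compat_r with (r := vnorm n u + 1) in Hh; [|lra].
      replace (dl / (vnorm n u + 1) * (vnorm n u + 1)) with dl in Hh by (field; lra).
      pose proof (vnorm_nonneg n u). pose proof (Rabs_pos h). nra. }
    specialize (Hfr _ Hn). rewrite Hrv, vnorm_scal in Hfr.
    assert (Hmv : matvec n (DF (r s)) (vscal h u) j = h * D s).
    { unfold D, matvec, vscal. rewrite <- rsum_scal. apply rsum_ext. intros; ring. }
    pose proof (vnorm_coord n (vsub (vsub (F (r (s+h))) (F (r s))) (matvec n (DF (r s)) (vscal h u))) j Hj) as Hco.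
    assert (Ec : vsub (vsub (F (r (s+h))) (F (r s))) (matvec n (DF (r s)) (vscal h u)) j = phi (s+h) - phi s - h * D s).
    { unfold vsub at 1 2. rewrite Hmv. reflexivity. }
    rewrite Ec in Hco.
    assert (Habs: Rabs (phi (s + h) - phi s - h * D s) < e * Rabs h).
    { eapply Rle_lt_trans. apply Hco. eapply Rle_lt_trans. apply Hfr.
      assert (0 < Rabs h) by (apply Rabs_pos_lt; auto).
      pose proof (vnorm_nonneg n u).
      assert (e / (vnorm n u + 1) * (Rabs h * vnorm n u) = (e * Rabs h) * (vnorm n u / (vnorm n u + 1))) by (field; lra).
      rewrite H1. assert (vnorm n u / (vnorm n u + 1) < 1).
      { apply (Rmult_lt_reg_r (vnorm n u + 1)); [lra|]. replace (vnorm n u / (vnorm n u + 1) * (vnorm n u + 1)) with (vnorm n u) by (field; lra). lra. }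
      assert (0 <= vnorm n u / (vnorm n u + 1)) by (apply Rmult_le_pos; [lra| left; apply Rinv_0_lt_compat; lra]).
      assert (0 < e * Rabs h) by (apply Rmult_lt_0_compat; lra).
      rewrite <- (Rmult_1_r (e * Rabs h)) at 2. apply Rmult_lt_compat_l; auto. }
    replace ((phi (s + h) - phi s) / h - D s) with ((phi (s + h) - phi s - h * D s) / h) by (field; auto).
    unfold Rdiv. rewrite Rabs_mult, Rabs_inv. apply (Rmult_lt_reg_r (Rabs h)). apply Rabs_pos_lt; auto.
    rewrite Rmult_assoc, Rinv_l. lra. apply Rabs_no_R0; auto. }
  destruct (MVT_cor2 phi D 0 1 ltac:(lra) (fun c _ => Hder c)) as [c [Heq Hc01]].
  assert (Hr1 : r 1 = p) by (apply functional_extensionality; intros k; unfold r, vadd, vscal; ring).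
  assert (Hr0 : r 0 = q) by (apply functional_extensionality; intros k; unfold r, vadd, vscal; ring).
  unfold phi in Heq. rewrite Hr1, Hr0 in Heq. rewrite Heq. rewrite Rminus_0_r, Rmult_1_r.
  unfold D. eapply Rle_trans. apply matvec_bound; auto.
  apply Rmult_le_compat_r. apply vnorm_nonneg. apply HL. unfold r. apply Hcv; auto. lra.
Qed.


Lemma ae_restrict a b a' b' P : ae_on a b P -> a <= a' -> b' <= b -> ae_on a' b' P.
Proof. intros [N [HN K]] H1 H2. exists N; split; auto. intros t Ht; apply K; lra. Qed.

Lemma sum_prod_bound m (G U : nat -> R) (Kb Ub : nat -> R) :
  (forall i, (i < m)%nat -> Rabs (G i) <= Kb i) -> (forall i, (i < m)%nat -> Rabs (U i) <= Ub i) ->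
  Rabs (rsum m (fun i => G i * U i)) <= rsum m (fun i => Kb i * Ub i).
Proof. intros H1 H2. eapply Rle_trans. apply rsum_abs. apply rsum_le. intros i Hi. rewrite Rabs_mult.
  apply Rmult_le_compat; auto; apply Rabs_pos. Qed.

Lemma sol_lip n m a b f g u z B K Ki U : a <= b ->
  solution_on n m a b f g u z -> (forall t, a <= t <= b -> B (z t)) ->
  (forall p, B p -> vnorm n (f p) <= K) -> (forall i p, (i < m)%nat -> B p -> vnorm n (g i p) <= Ki i) ->
  (forall i t, (i < m)%nat -> a <= t <= b -> Rabs (u i t) <= U i) ->
  forall j, (j < n)%nat -> forall t, a <= t <= b ->
  Rabs (z t j - z a j) <= (K + rsum m (fun i => Ki i * U i)) * (t - a).
Proof.
  intros Hab [Hac Hae] HB HK HKi HU j Hj t Ht.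
  apply (lemA_abs a t (fun s => z s j)). lra. apply ac_restrict with a b; auto; lra.
  apply ae_restrict with a b; try lra. eapply ae_mono. apply Hae. intros s Hs Hd.
  eexists. split. apply (Hd j Hj).
  eapply Rle_trans. apply Rabs_triang. apply Rplus_le_compat.
  eapply Rle_trans. apply vnorm_coord; eauto. apply HK; auto.
  apply sum_prod_bound. intros i Hi. eapply Rle_trans. apply vnorm_coord; eauto. apply HKi; auto.
  intros i Hi; apply HU; auto.
Qed.

Lemma fchoice m (P : nat -> (R -> R) -> Prop) : (forall i, (i < m)%nat -> exists F, P i F) ->
  exists FF : nat -> R -> R, forall i, (i < m)%nat -> P i (FF i).
Proof.
  intros H. assert (H' : forall i, exists F, (i < m)%nat -> P i F).
  { intros i. destruct (lt_dec i m). destruct (H i l) as [F HF]; exists F; auto. exists (fun _ => 0); intros; lia. }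
  exists (fun i => proj1_sig (constructive_indefinite_description _ (H' i))).
  intros i Hi. destruct (constructive_indefinite_description _ (H' i)); simpl; auto.
Qed.


Theorem mainTheorem2 :
  forall (m : nat) (K L Lam : R) (Ki Li V W : nat -> R),
  Lam <> 0 ->
  (forall i, (i < m)%nat -> 0 < V i) ->
  exists C : R,
  forall (n : nat)
    (f : (nat -> R) -> (nat -> R)) (Df : (nat -> R) -> nat -> nat -> R)
    (g : nat -> (nat -> R) -> (nat -> R)) (Dg : nat -> (nat -> R) -> nat -> nat -> R)
    (v w : nat -> R -> R) (x y : R -> nat -> R) (tk tk1 : R) (B : (nat -> R) -> Prop),
  tk < tk1 ->
  C1_with n f Df ->
  (forall i, (i < m)%nat -> C1_with n (g i) (Dg i)) ->
  (forall i, (i < m)%nat -> measurable_on tk tk1 (v i)) ->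
  (forall i t, (i < m)%nat -> tk <= t <= tk1 -> Rabs (v i t) <= V i) ->
  (forall i, (i < m)%nat -> measurable_on tk tk1 (w i)) ->
  (forall i t, (i < m)%nat -> tk <= t <= tk1 -> Rabs (w i t) <= W i) ->
  (forall i, (i < m)%nat -> leb_integral_is tk tk1 (fun t => v i t - w i t) 0) ->
  solution_on n m tk tk1 f g v x ->
  solution_on n m tk tk1 f g w y ->
  (forall j, (j < n)%nat -> y tk j = x tk j) ->
  convex B ->
  (forall t, tk <= t <= tk1 -> B (x t) /\ B (y t)) ->
  (forall p, B p -> vnorm n (f p) <= K) ->
  (forall i p, (i < m)%nat -> B p -> vnorm n (g i p) <= Ki i) ->
  (forall p, B p -> mnorm n (Df p) <= L) ->
  (forall i p, (i < m)%nat -> B p -> mnorm n (Dg i p) <= Li i) ->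
  (forall p, B p -> lognorm n (Df p) <= Lam) ->
  vnorm n (vsub (x tk1) (y tk1)) <= C * (tk1 - tk) ^ 2.
Proof.
  intros m K L Lam Ki Li V W _ HV.
  set (cx := K + rsum m (fun i => Ki i * V i)).
  set (cy := K + rsum m (fun i => Ki i * W i)).
  set (C := L * (cx + cy) + rsum m (fun i => Li i * V i * (cx + cy) + Li i * cy * (V i + W i))).
  exists C.
  intros n f Df g Dg v w x y tk tk1 B Htk Cf Cg _ Hv _ Hw Hint Sx Sy Hy0 Hcv HB HK HKi HL HLi _.
  set (h := tk1 - tk).
  assert (Hh : 0 < h) by (unfold h; lra).
  assert (HBx : B (x tk)) by (apply HB; lra).
  assert (HK0 : 0 <= K) by (eapply Rle_trans; [apply vnorm_nonneg| apply HK; eauto]).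
  assert (HKi0 : forall i, (i < m)%nat -> 0 <= Ki i) by (intros; eapply Rle_trans; [apply vnorm_nonneg| apply HKi; eauto]).
  assert (HL0 : 0 <= L) by (eapply Rle_trans; [apply mnorm_nonneg| apply HL; eauto]).
  assert (HLi0 : forall i, (i < m)%nat -> 0 <= Li i) by (intros; eapply Rle_trans; [apply mnorm_nonneg| apply HLi; eauto]).
  assert (HW0 : forall i, (i < m)%nat -> 0 <= W i).
  { intros i Hi. eapply Rle_trans; [apply Rabs_pos| apply (Hw i tk Hi)]. lra. }
  assert (Hcx : 0 <= cx). { unfold cx. assert (0 <= rsum m (fun i => Ki i * V i)); [|lra].
    apply rsum_nonneg; intros i Hi. pose proof (HKi0 i Hi); pose proof (HV i Hi); nra. }
  assert (Hcy : 0 <= cy). { unfold cy. assert (0 <= rsum m (fun i => Ki i * W i)); [|lra].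
    apply rsum_nonneg; intros i Hi. pose proof (HKi0 i Hi); pose proof (HW0 i Hi); nra. }
  assert (HC : 0 <= C).
  { unfold C. assert (0 <= rsum m (fun i => Li i * V i * (cx + cy) + Li i * cy * (V i + W i))).
    apply rsum_nonneg; intros i Hi. pose proof (HLi0 i Hi); pose proof (HV i Hi); pose proof (HW0 i Hi).
    assert (0 <= Li i * V i) by nra. assert (0 <= Li i * cy) by nra. nra. nra. }
  assert (Lx : forall j, (j < n)%nat -> forall t, tk <= t <= tk1 -> Rabs (x t j - x tk j) <= cx * (t - tk)).
  { intros. apply (sol_lip n m tk tk1 f g v x B K Ki V); auto; try lra. intros; apply HB; auto. }
  assert (Ly : forall j, (j < n)%nat -> forall t, tk <= t <= tk1 -> Rabs (y t j - y tk j) <= cy * (t - tk)).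
  { intros. apply (sol_lip n m tk tk1 f g w y B K Ki W); auto; try lra. intros; apply HB; auto. }
  assert (He : forall t, tk <= t <= tk1 -> vnorm n (vsub (x t) (y t)) <= (cx + cy) * h).
  { intros t Ht. apply vnorm_le. nra. intros j Hj. unfold vsub.
    replace (x t j - y t j) with ((x t j - x tk j) - (y t j - y tk j)) by (rewrite (Hy0 j Hj); ring).
    pose proof (Rabs_triang (x t j - x tk j) (- (y t j - y tk j))) as Ht3. rewrite Rabs_Ropp in Ht3.
    pose proof (Lx j Hj t Ht). pose proof (Ly j Hj t Ht).
    assert (cx * (t - tk) <= cx * h) by (apply Rmult_le_compat_l; unfold h; lra).
    assert (cy * (t - tk) <= cy * h) by (apply Rmult_le_compat_l; unfold h; lra).
    replace (x t j - x tk j - (y t j - y tk j)) with (x t j - x tk j + - (y t j - y tk j)) by ring. lra. }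
  assert (Hey : forall t, tk <= t <= tk1 -> vnorm n (vsub (y t) (y tk)) <= cy * h).
  { intros t Ht. apply vnorm_le. nra. intros j Hj. unfold vsub.
    pose proof (Ly j Hj t Ht). assert (cy * (t - tk) <= cy * h) by (apply Rmult_le_compat_l; unfold h; lra). lra. }
  destruct (fchoice m (fun i F => abs_cont_on tk tk1 F /\ ae_on tk tk1 (fun t => derivable_pt_lim F t (v i t - w i t))
     /\ F tk1 - F tk = 0)) as [FF HFF].
  { intros i Hi. destruct (Hint i Hi) as [F [A1 [A2 A3]]]. exists F; auto. }
  apply vnorm_le. assert (0 <= (tk1 - tk)^2) by (apply pow2_ge_0). nra.
  intros j Hj.
  set (c := fun i => g i (y tk) j).
  set (z := fun s => x s j - y s j - rsum m (fun i => c i * (FF i s - FF i tk))).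
  assert (Hz1 : z tk1 = x tk1 j - y tk1 j).
  { unfold z. rewrite (rsum_zero m). ring. intros i Hi. destruct (HFF i Hi) as [_ [_ H3]]. rewrite H3. ring. }
  assert (Hz0 : z tk = 0).
  { unfold z. rewrite (rsum_zero m). rewrite (Hy0 j Hj). ring. intros i Hi. ring. }
  assert (Hmain : Rabs (z tk1 - z tk) <= (C * h) * (tk1 - tk)).
  { apply (lemA_abs tk tk1 z). lra.
    - unfold z. apply ac_minus. apply ac_minus. apply (proj1 Sx j Hj). apply (proj1 Sy j Hj).
      apply ac_rsum. intros i Hi. apply ac_scal. apply ac_minus. apply (HFF i Hi). apply ac_const.
    - pose proof (ae_forall tk tk1 m (fun i t => derivable_pt_lim (FF i) t (v i t - w i t))) as Hall.
      assert (Hall' : ae_on tk tk1 (fun t => forall i, (i < m)%nat -> derivable_pt_lim (FF i) t (v i t - w i t))).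
      { apply Hall. intros i Hi. apply (HFF i Hi). }
      eapply ae_mono. apply (ae_and _ _ _ _ (proj2 Sx) (ae_and _ _ _ _ (proj2 Sy) Hall')).
      intros t Ht [Dx [Dy DF]].
      set (dx := f (x t) j + rsum m (fun i => g i (x t) j * v i t)).
      set (dy := f (y t) j + rsum m (fun i => g i (y t) j * w i t)).
      exists (dx - dy - rsum m (fun i => c i * (v i t - w i t))). split.
      + apply dpl_ext with (minus_fct (minus_fct (fun s => x s j) (fun s => y s j)) (fun s => rsum m (fun i => c i * (FF i s - FF i tk)))).
        intros; reflexivity.
        apply derivable_pt_lim_minus. apply derivable_pt_lim_minus. apply (Dx j Hj). apply (Dy j Hj).
        apply dpl_rsum. intros i Hi.
        replace (c i * (v i t - w i t)) with (c i * ((v i t - w i t) - 0)) by ring.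
        apply dpl_ext with (mult_real_fct (c i) (minus_fct (FF i) (fct_cte (FF i tk)))). intros; reflexivity.
        apply derivable_pt_lim_scal. apply derivable_pt_lim_minus. apply (DF i Hi). apply derivable_pt_lim_const.
      + destruct (HB t Ht) as [Bx By].
        set (T := fun i => (g i (x t) j - g i (y t) j) * v i t + (g i (y t) j - c i) * (v i t - w i t)).
        assert (Hd : dx - dy - rsum m (fun i => c i * (v i t - w i t)) = (f (x t) j - f (y t) j) + rsum m T).
        { assert (rsum m T = rsum m (fun i => g i (x t) j * v i t) - rsum m (fun i => g i (y t) j * w i t)
              - rsum m (fun i => c i * (v i t - w i t))).
          { rewrite <- !rsum_minus. apply rsum_ext. intros; unfold T; ring. }
          unfold dx, dy. lra. }
        rewrite Hd.
        pose proof (He t Ht) as Het. pose proof (Hey t Ht) as Heyt.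
        assert (HA : Rabs (f (x t) j - f (y t) j) <= L * ((cx + cy) * h)).
        { eapply Rle_trans. apply (mvt_vec n f Df B L Cf Hcv HL _ _ Bx By j Hj).
          apply Rmult_le_compat_l; auto. }
        assert (HT : forall i, (i < m)%nat -> Rabs (T i) <= h * (Li i * V i * (cx + cy) + Li i * cy * (V i + W i))).
        { intros i Hi. unfold T, c. eapply Rle_trans. apply Rabs_triang. rewrite !Rabs_mult.
          assert (G1 : Rabs (g i (x t) j - g i (y t) j) <= Li i * ((cx + cy) * h)).
          { eapply Rle_trans. apply (mvt_vec n (g i) (Dg i) B (Li i) (Cg i Hi) Hcv (fun p => HLi i p Hi) _ _ Bx By j Hj).
            apply Rmult_le_compat_l; auto. }
          assert (G2 : Rabs (g i (y t) j - g i (y tk) j) <= Li i * (cy * h)).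
          { eapply Rle_trans. apply (mvt_vec n (g i) (Dg i) B (Li i) (Cg i Hi) Hcv (fun p => HLi i p Hi) _ _ By (proj2 (HB tk ltac:(lra))) j Hj).
            apply Rmult_le_compat_l; auto. }
          assert (G3 : Rabs (v i t) <= V i) by (apply Hv; auto).
          assert (G4 : Rabs (v i t - w i t) <= V i + W i).
          { unfold Rminus. eapply Rle_trans. apply Rabs_triang. rewrite Rabs_Ropp. pose proof (Hw i t Hi Ht). lra. }
          assert (P1 : Rabs (g i (x t) j - g i (y t) j) * Rabs (v i t) <= Li i * ((cx + cy) * h) * V i).
          { apply Rmult_le_compat; auto; apply Rabs_pos. }
          assert (P2 : Rabs (g i (y t) j - g i (y tk) j) * Rabs (v i t - w i t) <= Li i * (cy * h) * (V i + W i)).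
          { apply Rmult_le_compat; auto; apply Rabs_pos. }
          nra. }
        eapply Rle_trans. apply Rabs_triang.
        eapply Rle_trans. apply Rplus_le_compat. apply HA. eapply Rle_trans. apply rsum_abs. apply rsum_le. apply HT.
        rewrite rsum_scal. unfold C. nra. }
  rewrite Hz1, Hz0, Rminus_0_r in Hmain. unfold vsub. unfold h in Hmain.
  unfold h. replace ((tk1 - tk) ^ 2) with ((tk1 - tk) * (tk1 - tk)) by ring. rewrite Rmult_assoc in Hmain. exact Hmain.
Qed.
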